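(* For $x=re^{i\theta}\in C$, $$\|A^S(x)\|^2-\frac{g}{2n}\|H^S(x)\|^2=\frac{n}{2r^2}\big\{g(1-\delta^2)\csc^2 g\theta+(g-2)\big\}.$$ If moreover $m_1=m_2$ (which always holds when $g\in\{1,3,6\}$), then $$\|A^S(x)\|^2-\frac{g}{n}\|H^S(x)\|^2=\frac{n(g-1)}{r^2}.$$
   Context: Let $M^n$ be a compact isoparametric hypersurface in the unit sphere $S^{n+1}\subset\mathbb{R}^{n+2}$ (constant principal curvatures) with $g$ distinct principal curvatures; then $g\in\{1,2,3,4,6\}$. Fix $x_0\in M$ and identify the 2-dimensional normal space $\nu_{x_0}M$ of $M$ in $\mathbb{R}^{n+2}$ with $\mathbb{C}$ so that the two focal submanifolds $M_+$, $M_-$ ($\dim M_+\le\dim M_-$) meet the normal circle at $1$ and $e^{i\pi/g}$ (the intersection points closest to $x_0$). The Weyl chamber is $C=\{re^{i\theta}:r>0,\ 0<\theta<\pi/g\}$. For $k=1,\dots,g$ let $\theta_k=k\pi/g-\pi/2$, $\alpha_k=e^{i\theta_k}$, and $m_k=m_1$ for $k$ odd, $m_k=m_2$ for $k$ even, where $(m_1,m_2)$, $m_1\le m_2$, is the multiplicity data of the principal curvatures; $m_1=m_2$ if $g$ is odd, and $(m_1+m_2)g=2n$. For $x\in C$, $M_x=\{p+\tilde\xi(p):p\in M\}$ where $\tilde\xi$ is the parallel normal field on $M$ with $\tilde\xi(x_0)=x-x_0$; it is an $n$-dimensional isoparametric submanifold of $\mathbb{R}^{n+2}$ lying in $S^{n+1}(|x|)$,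 with normal space $\nu_{x_0}M$ at $x$, and $T_xM_x=\oplus_kE_k$, $\dim E_k=m_k$, with Euclidean shape operator $A_\xi|_{E_k}=\langle\xi,-\alpha_k/\langle x,\alpha_k\rangle\rangle\mathrm{Id}$ ($\langle\cdot,\cdot\rangle$ the real inner product on $\mathbb{C}=\mathbb{R}^2$). $H^E(x),A^E(x)$ denote mean curvature vector and shape operator of $M_x$ at $x$ in $\mathbb{R}^{n+2}$; $H^S(x),A^S(x)$ those of $M_x$ as a hypersurface of $S^{n+1}(|x|)$; $\|A\|^2$ is the sum of squared Hilbert–Schmidt norms over an orthonormal normal basis. Set $\delta=(m_2-m_1)/(m_2+m_1)$ if $g\ge2$ and $\delta=0$ if $g=1$, and let $\theta_{\min}\in(0,\pi/g)$ be defined by $\cos g\theta_{\min}=-\delta$. *)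

(* Defs.v *)
From Stdlib Require Import Reals Lra Lia Arith.
Open Scope R_scope.

(* The normal space nu_{x0}M of M in R^{n+2} is identified with C = R^2;
   points of it are pairs (a,b) <-> a + i b. *)
Definition cplx : Type := (R * R)%type.
Definition cinner (u v : cplx) : R := fst u * fst v + snd u * snd v.
Definition cnorm (u : cplx) : R := sqrt (cinner u u).
Definition cscale (c : R) (u : cplx) : cplx := (c * fst u, c * snd u).
Definition cmul_i (u : cplx) : cplx := (- snd u, fst u).
Definition polar (r theta : R) : cplx := (r * cos theta, r * sin theta).

Fixpoint sum1 (g : nat) (F : nat -> R) : R :=
  match g with
  | O => 0
  | S g' => sum1 g' F + F (S g')
  end.

Definition theta_k (g k : nat) : R := INR k * PI / INR g - PI / 2.
Definition alpha_k (g k : nat) : cplx := polar 1 (theta_k g k).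

Definition mult_k (m1 m2 k : nat) : nat := if Nat.odd k then m1 else m2.

(* Euclidean shape operator of M_x at x in direction xi, restricted to E_k:
   A_xi|E_k = < xi , - alpha_k / <x, alpha_k> > Id.  Its eigenvalue: *)
Definition shapeE_eig (g : nat) (x xi : cplx) (k : nat) : R :=
  cinner xi (cscale (- / cinner x (alpha_k g k)) (alpha_k g k)).

(* M_x lies in the sphere S^{n+1}(|x|); its unit normal in that sphere at x
   is the unit vector of nu_{x0}M orthogonal to x, namely i x/|x|.
   The shape operator A^S(x) of M_x as a hypersurface of S^{n+1}(|x|) is the
   Euclidean shape operator in this direction; it acts on E_k (dim m_k) as
   the scalar shapeE_eig g x (i x/|x|) k. *)
Definition sphere_normal (x : cplx) : cplx := cscale (/ cnorm x) (cmul_i x).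

Definition shapeS_eig (g : nat) (x : cplx) (k : nat) : R :=
  shapeE_eig g x (sphere_normal x) k.

(* ||A^S(x)||^2 : squared Hilbert-Schmidt norm (one unit normal) =
   sum_k m_k * (eigenvalue on E_k)^2 *)
Definition normAS2 (g m1 m2 : nat) (x : cplx) : R :=
  sum1 g (fun k => INR (mult_k m1 m2 k) * (shapeS_eig g x k) ^ 2).

(* H^S(x) = (trace A^S(x)) * unit normal, hence
   ||H^S(x)||^2 = (sum_k m_k * eigenvalue on E_k)^2 *)
Definition normHS2 (g m1 m2 : nat) (x : cplx) : R :=
  (sum1 g (fun k => INR (mult_k m1 m2 k) * shapeS_eig g x k)) ^ 2.

Definition delta (g m1 m2 : nat) : R :=
  if (2 <=? g)%nat then (INR m2 - INR m1) / (INR m2 + INR m1) else 0.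

Definition iso_data (g m1 m2 n : nat) : Prop :=
  (g = 1 \/ g = 2 \/ g = 3 \/ g = 4 \/ g = 6)%nat /\
  (1 <= m1)%nat /\ (m1 <= m2)%nat /\
  (Nat.odd g = true -> m1 = m2) /\
  ((m1 + m2) * g = 2 * n)%nat.

(* Main.v *)
Require Import Defs.
From Stdlib Require Import Reals Lra Lia.
Open Scope R_scope.

Definition Xv (t a b : R) := (t*a+b)/(a-t*b).

Lemma cnorm_polar r th : 0 < r -> cnorm (polar r th) = r.
Proof.
  intros Hr. unfold cnorm, cinner, polar; simpl.
  assert (E2: r * cos th * (r * cos th) + r * sin th * (r * sin th) = r*r).
  { pose proof (sin2_cos2 th) as E; unfold Rsqr in E.
    transitivity (r*r*(sin th * sin th + cos th * cos th)); [ring| rewrite E; ring]. }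
  rewrite E2.
  apply sqrt_square; lra.
Qed.

Lemma den_nz th f : sin th <> 0 -> sin (th - f) <> 0 ->
  cos f - cos th / sin th * sin f <> 0.
Proof.
  intros Hs Hd E. apply Hd. rewrite sin_minus.
  replace (sin th * cos f - cos th * sin f) with
     (sin th * (cos f - cos th / sin th * sin f)) by (field; auto).
  rewrite E; ring.
Qed.

Lemma eig (g k : nat) (r th : R) : 0 < r -> sin th <> 0 ->
  sin (th - INR k * PI / INR g) <> 0 ->
  shapeS_eig g (polar r th) k =
  - Xv (cos th / sin th) (cos (INR k * PI / INR g)) (sin (INR k * PI / INR g)) / r.
Proof.
  intros Hr Hs Hd. pose proof (den_nz _ _ Hs Hd) as Hd'.
  unfold shapeS_eig, shapeE_eig, sphere_normal, Xv.
  rewrite cnorm_polar by exact Hr.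
  unfold alpha_k, theta_k, polar, cinner, cscale, cmul_i; simpl.
  set (f := INR k * PI / INR g) in *.
  rewrite cos_minus, sin_minus, cos_PI2, sin_PI2.
  rewrite sin_minus in Hd.
  replace (sin f * 1 + cos f * 0) with (sin f) by ring.
  replace (sin f * 0 - cos f * 1) with (- cos f) by ring.
  field. repeat split; auto; try lra.
  intro E; apply Hd; apply Rmult_eq_reg_l with (-r); [|lra]. rewrite Rmult_0_r.
  rewrite <- E; ring.
Qed.

Lemma INR_pos_g g : (1 <= g)%nat -> 0 < INR g.
Proof. intro; apply lt_0_INR; lia. Qed.

Lemma sin_k_neg g k th : (1 <= k <= g)%nat -> 0 < th -> th < PI / INR g ->
  sin (th - INR k * PI / INR g) < 0.
Proof.
  intros Hk H0 H1. assert (Hg: 0 < INR g) by (apply INR_pos_g; lia).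
  assert (Hk1: 1 <= INR k) by (apply (le_INR 1); lia).
  assert (Hkg: INR k <= INR g) by (apply le_INR; lia).
  set (u := PI / INR g) in *.
  assert (Hu: 0 < u) by (unfold u; apply Rdiv_lt_0_compat; [apply PI_RGT_0|lra]).
  replace (INR k * PI / INR g) with (INR k * u) by (unfold u; field; lra).
  assert (HP: INR g * u = PI) by (unfold u; field; lra).
  apply sin_lt_0_var; nra.
Qed.

Lemma sk_nz g k th : (1 <= k <= g)%nat -> 0 < th -> th < PI / INR g ->
  sin (th - INR k * PI / INR g) <> 0.
Proof. intros; apply Rlt_not_eq; apply sin_k_neg; auto. Qed.

Lemma sin_th_pos g th : (1 <= g)%nat -> 0 < th -> th < PI / INR g -> 0 < sin th.
Proof.
  intros Hg H0 H1. apply sin_gt_0; auto.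
  assert (Hg1: 1 <= INR g) by (apply (le_INR 1); lia).
  assert (PI / INR g <= PI); [|lra].
  unfold Rdiv. rewrite <- (Rmult_1_r PI) at 2. apply Rmult_le_compat_l.
  pose proof PI_RGT_0; lra. rewrite <- Rinv_1. apply Rinv_le_contravar; lra.
Qed.

Lemma sin_g_pos g th : (1 <= g)%nat -> 0 < th -> th < PI / INR g -> 0 < sin (INR g * th).
Proof.
  intros Hg H0 H1. assert (Hg0: 0 < INR g) by (apply INR_pos_g; lia).
  apply sin_gt_0. nra.
  replace PI with (INR g * (PI / INR g)) by (field; lra).
  apply Rmult_lt_compat_l; lra.
Qed.

Lemma s2_val th : sin th <> 0 -> sin th ^ 2 = / (1 + (cos th / sin th)^2).
Proof.
  intro Hs. pose proof (sin2_cos2 th) as E; unfold Rsqr in E.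
  assert (0 < 1 + (cos th / sin th)^2) by nra.
  apply (Rmult_eq_reg_r (1 + (cos th / sin th)^2)); [|lra].
  rewrite Rinv_l by lra.
  transitivity (sin th * sin th + cos th * cos th); [field; auto | exact E].
Qed.

Lemma pair t a b : a - t*b <> 0 -> -a - t*b <> 0 ->
  a^2 - t^2*b^2 <> 0 /\
  Xv t a b + Xv t (-a) b = 2*t*(a^2+b^2)/(a^2 - t^2*b^2) /\
  Xv t a b ^2 + Xv t (-a) b ^2 =
    (2*t^2*(a^2+b^2)^2 + 2*a^2*b^2*(1+t^2)^2)/(a^2-t^2*b^2)^2.
Proof.
  intros H1 H2. assert (a^2 - t^2*b^2 <> 0).
  { replace (a^2 - t^2*b^2) with (- ((a - t*b) * (-a - t*b))) by ring.
    intro E. apply Ropp_eq_0_compat in E. rewrite Ropp_involutive in E.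
    apply Rmult_integral in E. tauto. }
  assert (a ^ 2 - (t * b) ^ 2 <> 0) by (replace (a ^ 2 - (t * b) ^ 2) with (a^2 - t^2*b^2) by ring; auto).
  unfold Xv; split; [auto|split]; field; repeat split; auto.
Qed.

Lemma sq3 : (sqrt 3 / 2)^2 = 3/4.
Proof. replace ((sqrt 3 / 2)^2) with (sqrt 3 ^2 / 4) by field. rewrite pow2_sqrt; lra. Qed.
Lemma sq2 : (1 / sqrt 2)^2 = 1/2.
Proof. assert (0 < sqrt 2) by (apply sqrt_lt_R0; lra).
  replace ((1 / sqrt 2)^2) with (1 / sqrt 2 ^2) by (field; lra). rewrite pow2_sqrt; lra. Qed.

Lemma case1 m1 m2 n r th : (1 <= m1)%nat -> m1 = m2 -> ((m1 + m2) * 1 = 2 * n)%nat ->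
  0 < r -> 0 < th -> th < PI / INR 1 ->
  let x := polar r th in
  normAS2 1 m1 m2 x - INR 1 / (2 * INR n) * normHS2 1 m1 m2 x =
    INR n / (2 * r ^ 2) *
      (INR 1 * (1 - (delta 1 m1 m2) ^ 2) / (sin (INR 1 * th)) ^ 2
       + (INR 1 - 2))
  /\
  (m1 = m2 ->
   normAS2 1 m1 m2 x - INR 1 / INR n * normHS2 1 m1 m2 x =
     INR n * (INR 1 - 1) / r ^ 2).
Proof.
  intros Hm1 Heq Hn Hr H0 H1 x.
  subst m2.
  assert (Hs: 0 < sin th) by (apply (sin_th_pos 1); auto; lia).
  assert (Hs0: sin th <> 0) by lra.
  assert (D: forall k, (1 <= k <= 1)%nat -> sin (th - INR k * PI / INR 1) <> 0)
    by (intros; apply sk_nz; auto).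
  set (T := cos th / sin th).
  assert (HA: normAS2 1 m1 m1 x = (INR m1 * (Xv T (cos (INR 1 * PI / INR 1)) (sin (INR 1 * PI / INR 1)))^2) / r^2).
  { unfold x, normAS2. cbn [sum1]; unfold mult_k, Nat.odd; cbn [Nat.even negb].
    rewrite (eig 1 1 r th Hr Hs0 (D 1%nat ltac:(lia))).
    fold T. field. lra. }
  assert (HH: normHS2 1 m1 m1 x = (INR m1 * (Xv T (cos (INR 1 * PI / INR 1)) (sin (INR 1 * PI / INR 1))))^2 / r^2).
  { unfold x, normHS2. cbn [sum1]; unfold mult_k, Nat.odd; cbn [Nat.even negb].
    rewrite (eig 1 1 r th Hr Hs0 (D 1%nat ltac:(lia))).
    fold T. field. lra. }
  pose proof (den_nz th _ Hs0 (D 1%nat ltac:(lia))) as N1. fold T in N1.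
  assert (E1: INR 1 * PI / INR 1 = PI) by (simpl; field).
  rewrite ?E1 in HA.
  rewrite ?E1 in HH.
  rewrite ?E1 in N1.
  rewrite ?Rtrigo_facts.cos_pi_minus, ?sin_PI_x, ?cos_PI6, ?sin_PI6, ?cos_PI3, ?sin_PI3, ?cos_PI4, ?sin_PI4, ?cos_PI2, ?sin_PI2, ?cos_PI, ?sin_PI in HA.
  rewrite ?Rtrigo_facts.cos_pi_minus, ?sin_PI_x, ?cos_PI6, ?sin_PI6, ?cos_PI3, ?sin_PI3, ?cos_PI4, ?sin_PI4, ?cos_PI2, ?sin_PI2, ?cos_PI, ?sin_PI in HH.
  rewrite ?Rtrigo_facts.cos_pi_minus, ?sin_PI_x, ?cos_PI6, ?sin_PI6, ?cos_PI3, ?sin_PI3, ?cos_PI4, ?sin_PI4, ?cos_PI2, ?sin_PI2, ?cos_PI, ?sin_PI in N1.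
  unfold Xv in HA, HH.
  assert (Hc: cos th = T * sin th) by (unfold T; field; auto).
  assert (HS2: sin th ^ 2 = / (1 + T^2)) by (apply s2_val; auto).
  assert (HT2: 0 < 1 + T^2) by nra.
  assert (SG: sin (INR 1 * th) ^ 2 = (1)^2 / (1+T^2)^1).
  { replace (INR 1 * th) with (th) by (simpl; ring).
    rewrite ?Hc.
    transitivity ((sin th ^2)^1 * (1)^2); [ring | rewrite HS2; field; lra]. }
  assert (HP: 1 <> 0) by lra.
  assert (HnR: INR n = (INR m1 + INR m1)/2).
  { apply (f_equal INR) in Hn. rewrite !mult_INR, plus_INR in Hn. simpl in Hn. lra. }
  assert (HM1: 1 <= INR m1) by (apply (le_INR 1); lia).
  
  
  rewrite HA, HH, SG, HnR. unfold delta. cbn [Nat.leb].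
  replace (INR 1) with 1 by (simpl; ring).
  split.
  - field. repeat split; try lra; auto.
  - intro Heq2.  field. repeat split; try lra; auto.
Qed.

Lemma case2 m1 m2 n r th : (1 <= m1)%nat -> ((m1 + m2) * 2 = 2 * n)%nat ->
  0 < r -> 0 < th -> th < PI / INR 2 ->
  let x := polar r th in
  normAS2 2 m1 m2 x - INR 2 / (2 * INR n) * normHS2 2 m1 m2 x =
    INR n / (2 * r ^ 2) *
      (INR 2 * (1 - (delta 2 m1 m2) ^ 2) / (sin (INR 2 * th)) ^ 2
       + (INR 2 - 2))
  /\
  (m1 = m2 ->
   normAS2 2 m1 m2 x - INR 2 / INR n * normHS2 2 m1 m2 x =
     INR n * (INR 2 - 1) / r ^ 2).
Proof.
  intros Hm1 Hn Hr H0 H1 x.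
  
  assert (Hs: 0 < sin th) by (apply (sin_th_pos 2); auto; lia).
  assert (Hs0: sin th <> 0) by lra.
  assert (D: forall k, (1 <= k <= 2)%nat -> sin (th - INR k * PI / INR 2) <> 0)
    by (intros; apply sk_nz; auto).
  set (T := cos th / sin th).
  assert (HA: normAS2 2 m1 m2 x = (INR m1 * (Xv T (cos (INR 1 * PI / INR 2)) (sin (INR 1 * PI / INR 2)))^2 + INR m2 * (Xv T (cos (INR 2 * PI / INR 2)) (sin (INR 2 * PI / INR 2)))^2) / r^2).
  { unfold x, normAS2. cbn [sum1]; unfold mult_k, Nat.odd; cbn [Nat.even negb].
    rewrite (eig 2 1 r th Hr Hs0 (D 1%nat ltac:(lia))), (eig 2 2 r th Hr Hs0 (D 2%nat ltac:(lia))).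
    fold T. field. lra. }
  assert (HH: normHS2 2 m1 m2 x = (INR m1 * (Xv T (cos (INR 1 * PI / INR 2)) (sin (INR 1 * PI / INR 2))) + INR m2 * (Xv T (cos (INR 2 * PI / INR 2)) (sin (INR 2 * PI / INR 2))))^2 / r^2).
  { unfold x, normHS2. cbn [sum1]; unfold mult_k, Nat.odd; cbn [Nat.even negb].
    rewrite (eig 2 1 r th Hr Hs0 (D 1%nat ltac:(lia))), (eig 2 2 r th Hr Hs0 (D 2%nat ltac:(lia))).
    fold T. field. lra. }
  pose proof (den_nz th _ Hs0 (D 1%nat ltac:(lia))) as N1. fold T in N1.
  pose proof (den_nz th _ Hs0 (D 2%nat ltac:(lia))) as N2. fold T in N2.
  assert (E1: INR 1 * PI / INR 2 = PI/2) by (simpl; field).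
  assert (E2: INR 2 * PI / INR 2 = PI) by (simpl; field).
  rewrite ?E1, ?E2 in HA.
  rewrite ?E1, ?E2 in HH.
  rewrite ?E1, ?E2 in N1.
  rewrite ?E1, ?E2 in N2.
  rewrite ?Rtrigo_facts.cos_pi_minus, ?sin_PI_x, ?cos_PI6, ?sin_PI6, ?cos_PI3, ?sin_PI3, ?cos_PI4, ?sin_PI4, ?cos_PI2, ?sin_PI2, ?cos_PI, ?sin_PI in HA.
  rewrite ?Rtrigo_facts.cos_pi_minus, ?sin_PI_x, ?cos_PI6, ?sin_PI6, ?cos_PI3, ?sin_PI3, ?cos_PI4, ?sin_PI4, ?cos_PI2, ?sin_PI2, ?cos_PI, ?sin_PI in HH.
  rewrite ?Rtrigo_facts.cos_pi_minus, ?sin_PI_x, ?cos_PI6, ?sin_PI6, ?cos_PI3, ?sin_PI3, ?cos_PI4, ?sin_PI4, ?cos_PI2, ?sin_PI2, ?cos_PI, ?sin_PI in N1.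
  rewrite ?Rtrigo_facts.cos_pi_minus, ?sin_PI_x, ?cos_PI6, ?sin_PI6, ?cos_PI3, ?sin_PI3, ?cos_PI4, ?sin_PI4, ?cos_PI2, ?sin_PI2, ?cos_PI, ?sin_PI in N2.
  unfold Xv in HA, HH.
  assert (HT: T <> 0) by (intro E; apply N1; rewrite E; ring).
  assert (Hc: cos th = T * sin th) by (unfold T; field; auto).
  assert (HS2: sin th ^ 2 = / (1 + T^2)) by (apply s2_val; auto).
  assert (HT2: 0 < 1 + T^2) by nra.
  assert (SG: sin (INR 2 * th) ^ 2 = (2*T)^2 / (1+T^2)^2).
  { replace (INR 2 * th) with (2*th) by (simpl; ring).
    rewrite sin_2a, ?Hc.
    transitivity ((sin th ^2)^2 * (2*T)^2); [ring | rewrite HS2; field; lra]. }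
  assert (HP: 2*T <> 0).
  { intro E. pose proof (sin_g_pos 2 th ltac:(lia) H0 H1) as G.
    assert (G2: 0 < sin (INR 2 * th)^2) by (apply pow_lt; lra).
    rewrite SG, E in G2. replace (0^2 / (1+T^2)^2) with 0 in G2 by (field; lra). lra. }
  assert (HnR: INR n = INR m1 + INR m2).
  { apply (f_equal INR) in Hn. rewrite !mult_INR, plus_INR in Hn. simpl in Hn. lra. }
  assert (HM1: 1 <= INR m1) by (apply (le_INR 1); lia).
  assert (HM2: 0 <= INR m2) by apply pos_INR.
  
  rewrite HA, HH, SG, HnR. unfold delta. cbn [Nat.leb].
  replace (INR 2) with 2 by (simpl; ring).
  split.
  - field. repeat split; try lra; auto.
  - intro Heq2. subst m2. field. repeat split; try lra; auto.
Qed.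

Lemma case3 m1 m2 n r th : (1 <= m1)%nat -> m1 = m2 -> ((m1 + m2) * 3 = 2 * n)%nat ->
  0 < r -> 0 < th -> th < PI / INR 3 ->
  let x := polar r th in
  normAS2 3 m1 m2 x - INR 3 / (2 * INR n) * normHS2 3 m1 m2 x =
    INR n / (2 * r ^ 2) *
      (INR 3 * (1 - (delta 3 m1 m2) ^ 2) / (sin (INR 3 * th)) ^ 2
       + (INR 3 - 2))
  /\
  (m1 = m2 ->
   normAS2 3 m1 m2 x - INR 3 / INR n * normHS2 3 m1 m2 x =
     INR n * (INR 3 - 1) / r ^ 2).
Proof.
  intros Hm1 Heq Hn Hr H0 H1 x.
  subst m2.
  assert (Hs: 0 < sin th) by (apply (sin_th_pos 3); auto; lia).
  assert (Hs0: sin th <> 0) by lra.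
  assert (D: forall k, (1 <= k <= 3)%nat -> sin (th - INR k * PI / INR 3) <> 0)
    by (intros; apply sk_nz; auto).
  set (T := cos th / sin th).
  assert (HA: normAS2 3 m1 m1 x = (INR m1 * ((Xv T (cos (INR 1 * PI / INR 3)) (sin (INR 1 * PI / INR 3)))^2 + (Xv T (cos (INR 2 * PI / INR 3)) (sin (INR 2 * PI / INR 3)))^2) + INR m1 * (Xv T (cos (INR 3 * PI / INR 3)) (sin (INR 3 * PI / INR 3)))^2) / r^2).
  { unfold x, normAS2. cbn [sum1]; unfold mult_k, Nat.odd; cbn [Nat.even negb].
    rewrite (eig 3 1 r th Hr Hs0 (D 1%nat ltac:(lia))), (eig 3 2 r th Hr Hs0 (D 2%nat ltac:(lia))), (eig 3 3 r th Hr Hs0 (D 3%nat ltac:(lia))).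
    fold T. field. lra. }
  assert (HH: normHS2 3 m1 m1 x = (INR m1 * ((Xv T (cos (INR 1 * PI / INR 3)) (sin (INR 1 * PI / INR 3))) + (Xv T (cos (INR 2 * PI / INR 3)) (sin (INR 2 * PI / INR 3)))) + INR m1 * (Xv T (cos (INR 3 * PI / INR 3)) (sin (INR 3 * PI / INR 3))))^2 / r^2).
  { unfold x, normHS2. cbn [sum1]; unfold mult_k, Nat.odd; cbn [Nat.even negb].
    rewrite (eig 3 1 r th Hr Hs0 (D 1%nat ltac:(lia))), (eig 3 2 r th Hr Hs0 (D 2%nat ltac:(lia))), (eig 3 3 r th Hr Hs0 (D 3%nat ltac:(lia))).
    fold T. field. lra. }
  pose proof (den_nz th _ Hs0 (D 1%nat ltac:(lia))) as N1. fold T in N1.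
  pose proof (den_nz th _ Hs0 (D 2%nat ltac:(lia))) as N2. fold T in N2.
  pose proof (den_nz th _ Hs0 (D 3%nat ltac:(lia))) as N3. fold T in N3.
  assert (E1: INR 1 * PI / INR 3 = PI/3) by (simpl; field).
  assert (E2: INR 2 * PI / INR 3 = PI - PI/3) by (simpl; field).
  assert (E3: INR 3 * PI / INR 3 = PI) by (simpl; field).
  rewrite ?E1, ?E2, ?E3 in HA.
  rewrite ?E1, ?E2, ?E3 in HH.
  rewrite ?E1, ?E2, ?E3 in N1.
  rewrite ?E1, ?E2, ?E3 in N2.
  rewrite ?E1, ?E2, ?E3 in N3.
  rewrite ?Rtrigo_facts.cos_pi_minus, ?sin_PI_x, ?cos_PI6, ?sin_PI6, ?cos_PI3, ?sin_PI3, ?cos_PI4, ?sin_PI4, ?cos_PI2, ?sin_PI2, ?cos_PI, ?sin_PI in HA.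
  rewrite ?Rtrigo_facts.cos_pi_minus, ?sin_PI_x, ?cos_PI6, ?sin_PI6, ?cos_PI3, ?sin_PI3, ?cos_PI4, ?sin_PI4, ?cos_PI2, ?sin_PI2, ?cos_PI, ?sin_PI in HH.
  rewrite ?Rtrigo_facts.cos_pi_minus, ?sin_PI_x, ?cos_PI6, ?sin_PI6, ?cos_PI3, ?sin_PI3, ?cos_PI4, ?sin_PI4, ?cos_PI2, ?sin_PI2, ?cos_PI, ?sin_PI in N1.
  rewrite ?Rtrigo_facts.cos_pi_minus, ?sin_PI_x, ?cos_PI6, ?sin_PI6, ?cos_PI3, ?sin_PI3, ?cos_PI4, ?sin_PI4, ?cos_PI2, ?sin_PI2, ?cos_PI, ?sin_PI in N2.
  rewrite ?Rtrigo_facts.cos_pi_minus, ?sin_PI_x, ?cos_PI6, ?sin_PI6, ?cos_PI3, ?sin_PI3, ?cos_PI4, ?sin_PI4, ?cos_PI2, ?sin_PI2, ?cos_PI, ?sin_PI in N3.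
  destruct (pair T (1/2) (sqrt 3 / 2) N1 N2) as [Z0 [P0 Q0]].
  rewrite P0 in HH. rewrite Q0 in HA.
  rewrite ?sq3 in HH.
  rewrite ?sq3 in HA.
  rewrite ?sq3 in Z0.
  unfold Xv in HA, HH.
  assert (Hc: cos th = T * sin th) by (unfold T; field; auto).
  assert (HS2: sin th ^ 2 = / (1 + T^2)) by (apply s2_val; auto).
  assert (HT2: 0 < 1 + T^2) by nra.
  assert (SG: sin (INR 3 * th) ^ 2 = (3*T^2-1)^2 / (1+T^2)^3).
  { replace (INR 3 * th) with (2*th+th) by (simpl; ring).
    rewrite sin_plus, sin_2a, cos_2a, ?Hc.
    transitivity ((sin th ^2)^3 * (3*T^2-1)^2); [ring | rewrite HS2; field; lra]. }
  assert (HP: 3*T^2-1 <> 0).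
  { intro E. pose proof (sin_g_pos 3 th ltac:(lia) H0 H1) as G.
    assert (G2: 0 < sin (INR 3 * th)^2) by (apply pow_lt; lra).
    rewrite SG, E in G2. replace (0^2 / (1+T^2)^3) with 0 in G2 by (field; lra). lra. }
  assert (HnR: INR n = 3*(INR m1 + INR m1)/2).
  { apply (f_equal INR) in Hn. rewrite !mult_INR, plus_INR in Hn. simpl in Hn. lra. }
  assert (HM1: 1 <= INR m1) by (apply (le_INR 1); lia).
  
  
  rewrite HA, HH, SG, HnR. unfold delta. cbn [Nat.leb].
  replace (INR 3) with 3 by (simpl; ring).
  split.
  - field. repeat split; try lra; auto.
  - intro Heq2.  field. repeat split; try lra; auto.
Qed.

Lemma case4 m1 m2 n r th : (1 <= m1)%nat -> ((m1 + m2) * 4 = 2 * n)%nat ->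
  0 < r -> 0 < th -> th < PI / INR 4 ->
  let x := polar r th in
  normAS2 4 m1 m2 x - INR 4 / (2 * INR n) * normHS2 4 m1 m2 x =
    INR n / (2 * r ^ 2) *
      (INR 4 * (1 - (delta 4 m1 m2) ^ 2) / (sin (INR 4 * th)) ^ 2
       + (INR 4 - 2))
  /\
  (m1 = m2 ->
   normAS2 4 m1 m2 x - INR 4 / INR n * normHS2 4 m1 m2 x =
     INR n * (INR 4 - 1) / r ^ 2).
Proof.
  intros Hm1 Hn Hr H0 H1 x.
  
  assert (Hs: 0 < sin th) by (apply (sin_th_pos 4); auto; lia).
  assert (Hs0: sin th <> 0) by lra.
  assert (D: forall k, (1 <= k <= 4)%nat -> sin (th - INR k * PI / INR 4) <> 0)
    by (intros; apply sk_nz; auto).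
  set (T := cos th / sin th).
  assert (HA: normAS2 4 m1 m2 x = (INR m1 * ((Xv T (cos (INR 1 * PI / INR 4)) (sin (INR 1 * PI / INR 4)))^2 + (Xv T (cos (INR 3 * PI / INR 4)) (sin (INR 3 * PI / INR 4)))^2) + INR m2 * ((Xv T (cos (INR 2 * PI / INR 4)) (sin (INR 2 * PI / INR 4)))^2 + (Xv T (cos (INR 4 * PI / INR 4)) (sin (INR 4 * PI / INR 4)))^2)) / r^2).
  { unfold x, normAS2. cbn [sum1]; unfold mult_k, Nat.odd; cbn [Nat.even negb].
    rewrite (eig 4 1 r th Hr Hs0 (D 1%nat ltac:(lia))), (eig 4 2 r th Hr Hs0 (D 2%nat ltac:(lia))), (eig 4 3 r th Hr Hs0 (D 3%nat ltac:(lia))), (eig 4 4 r th Hr Hs0 (D 4%nat ltac:(lia))).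
    fold T. field. lra. }
  assert (HH: normHS2 4 m1 m2 x = (INR m1 * ((Xv T (cos (INR 1 * PI / INR 4)) (sin (INR 1 * PI / INR 4))) + (Xv T (cos (INR 3 * PI / INR 4)) (sin (INR 3 * PI / INR 4)))) + INR m2 * ((Xv T (cos (INR 2 * PI / INR 4)) (sin (INR 2 * PI / INR 4))) + (Xv T (cos (INR 4 * PI / INR 4)) (sin (INR 4 * PI / INR 4)))))^2 / r^2).
  { unfold x, normHS2. cbn [sum1]; unfold mult_k, Nat.odd; cbn [Nat.even negb].
    rewrite (eig 4 1 r th Hr Hs0 (D 1%nat ltac:(lia))), (eig 4 2 r th Hr Hs0 (D 2%nat ltac:(lia))), (eig 4 3 r th Hr Hs0 (D 3%nat ltac:(lia))), (eig 4 4 r th Hr Hs0 (D 4%nat ltac:(lia))).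
    fold T. field. lra. }
  pose proof (den_nz th _ Hs0 (D 1%nat ltac:(lia))) as N1. fold T in N1.
  pose proof (den_nz th _ Hs0 (D 2%nat ltac:(lia))) as N2. fold T in N2.
  pose proof (den_nz th _ Hs0 (D 3%nat ltac:(lia))) as N3. fold T in N3.
  pose proof (den_nz th _ Hs0 (D 4%nat ltac:(lia))) as N4. fold T in N4.
  assert (E1: INR 1 * PI / INR 4 = PI/4) by (simpl; field).
  assert (E2: INR 2 * PI / INR 4 = PI/2) by (simpl; field).
  assert (E3: INR 3 * PI / INR 4 = PI - PI/4) by (simpl; field).
  assert (E4: INR 4 * PI / INR 4 = PI) by (simpl; field).
  rewrite ?E1, ?E2, ?E3, ?E4 in HA.
  rewrite ?E1, ?E2, ?E3, ?E4 in HH.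
  rewrite ?E1, ?E2, ?E3, ?E4 in N1.
  rewrite ?E1, ?E2, ?E3, ?E4 in N2.
  rewrite ?E1, ?E2, ?E3, ?E4 in N3.
  rewrite ?E1, ?E2, ?E3, ?E4 in N4.
  rewrite ?Rtrigo_facts.cos_pi_minus, ?sin_PI_x, ?cos_PI6, ?sin_PI6, ?cos_PI3, ?sin_PI3, ?cos_PI4, ?sin_PI4, ?cos_PI2, ?sin_PI2, ?cos_PI, ?sin_PI in HA.
  rewrite ?Rtrigo_facts.cos_pi_minus, ?sin_PI_x, ?cos_PI6, ?sin_PI6, ?cos_PI3, ?sin_PI3, ?cos_PI4, ?sin_PI4, ?cos_PI2, ?sin_PI2, ?cos_PI, ?sin_PI in HH.
  rewrite ?Rtrigo_facts.cos_pi_minus, ?sin_PI_x, ?cos_PI6, ?sin_PI6, ?cos_PI3, ?sin_PI3, ?cos_PI4, ?sin_PI4, ?cos_PI2, ?sin_PI2, ?cos_PI, ?sin_PI in N1.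
  rewrite ?Rtrigo_facts.cos_pi_minus, ?sin_PI_x, ?cos_PI6, ?sin_PI6, ?cos_PI3, ?sin_PI3, ?cos_PI4, ?sin_PI4, ?cos_PI2, ?sin_PI2, ?cos_PI, ?sin_PI in N2.
  rewrite ?Rtrigo_facts.cos_pi_minus, ?sin_PI_x, ?cos_PI6, ?sin_PI6, ?cos_PI3, ?sin_PI3, ?cos_PI4, ?sin_PI4, ?cos_PI2, ?sin_PI2, ?cos_PI, ?sin_PI in N3.
  rewrite ?Rtrigo_facts.cos_pi_minus, ?sin_PI_x, ?cos_PI6, ?sin_PI6, ?cos_PI3, ?sin_PI3, ?cos_PI4, ?sin_PI4, ?cos_PI2, ?sin_PI2, ?cos_PI, ?sin_PI in N4.
  destruct (pair T (1 / sqrt 2) (1 / sqrt 2) N1 N3) as [Z0 [P0 Q0]].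
  rewrite P0 in HH. rewrite Q0 in HA.
  rewrite ?sq2 in HH.
  rewrite ?sq2 in HA.
  rewrite ?sq2 in Z0.
  unfold Xv in HA, HH.
  assert (HT: T <> 0) by (intro E; apply N2; rewrite E; ring).
  assert (Hc: cos th = T * sin th) by (unfold T; field; auto).
  assert (HS2: sin th ^ 2 = / (1 + T^2)) by (apply s2_val; auto).
  assert (HT2: 0 < 1 + T^2) by nra.
  assert (SG: sin (INR 4 * th) ^ 2 = (4*T^3-4*T)^2 / (1+T^2)^4).
  { replace (INR 4 * th) with (2*(2*th)) by (simpl; ring).
    rewrite sin_2a, sin_2a, cos_2a, ?Hc.
    transitivity ((sin th ^2)^4 * (4*T^3-4*T)^2); [ring | rewrite HS2; field; lra]. }
  assert (HP: 4*T^3-4*T <> 0).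
  { intro E. pose proof (sin_g_pos 4 th ltac:(lia) H0 H1) as G.
    assert (G2: 0 < sin (INR 4 * th)^2) by (apply pow_lt; lra).
    rewrite SG, E in G2. replace (0^2 / (1+T^2)^4) with 0 in G2 by (field; lra). lra. }
  assert (HnR: INR n = 2*(INR m1 + INR m2)).
  { apply (f_equal INR) in Hn. rewrite !mult_INR, plus_INR in Hn. simpl in Hn. lra. }
  assert (HM1: 1 <= INR m1) by (apply (le_INR 1); lia).
  assert (HM2: 0 <= INR m2) by apply pos_INR.
  
  rewrite HA, HH, SG, HnR. unfold delta. cbn [Nat.leb].
  replace (INR 4) with 4 by (simpl; ring).
  split.
  - field. repeat split; try lra; auto.
  - intro Heq2. subst m2. field. repeat split; try lra; auto.
Qed.

Lemma case6 m1 m2 n r th : (1 <= m1)%nat -> ((m1 + m2) * 6 = 2 * n)%nat ->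
  0 < r -> 0 < th -> th < PI / INR 6 ->
  let x := polar r th in
  normAS2 6 m1 m2 x - INR 6 / (2 * INR n) * normHS2 6 m1 m2 x =
    INR n / (2 * r ^ 2) *
      (INR 6 * (1 - (delta 6 m1 m2) ^ 2) / (sin (INR 6 * th)) ^ 2
       + (INR 6 - 2))
  /\
  (m1 = m2 ->
   normAS2 6 m1 m2 x - INR 6 / INR n * normHS2 6 m1 m2 x =
     INR n * (INR 6 - 1) / r ^ 2).
Proof.
  intros Hm1 Hn Hr H0 H1 x.
  
  assert (Hs: 0 < sin th) by (apply (sin_th_pos 6); auto; lia).
  assert (Hs0: sin th <> 0) by lra.
  assert (D: forall k, (1 <= k <= 6)%nat -> sin (th - INR k * PI / INR 6) <> 0)
    by (intros; apply sk_nz; auto).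
  set (T := cos th / sin th).
  assert (HA: normAS2 6 m1 m2 x = (INR m1 * ((Xv T (cos (INR 1 * PI / INR 6)) (sin (INR 1 * PI / INR 6)))^2 + (Xv T (cos (INR 5 * PI / INR 6)) (sin (INR 5 * PI / INR 6)))^2) + INR m1 * (Xv T (cos (INR 3 * PI / INR 6)) (sin (INR 3 * PI / INR 6)))^2 + INR m2 * ((Xv T (cos (INR 2 * PI / INR 6)) (sin (INR 2 * PI / INR 6)))^2 + (Xv T (cos (INR 4 * PI / INR 6)) (sin (INR 4 * PI / INR 6)))^2) + INR m2 * (Xv T (cos (INR 6 * PI / INR 6)) (sin (INR 6 * PI / INR 6)))^2) / r^2).
  { unfold x, normAS2. cbn [sum1]; unfold mult_k, Nat.odd; cbn [Nat.even negb].
    rewrite (eig 6 1 r th Hr Hs0 (D 1%nat ltac:(lia))), (eig 6 2 r th Hr Hs0 (D 2%nat ltac:(lia))), (eig 6 3 r th Hr Hs0 (D 3%nat ltac:(lia))), (eig 6 4 r th Hr Hs0 (D 4%nat ltac:(lia))), (eig 6 5 r th Hr Hs0 (D 5%nat ltac:(lia))), (eig 6 6 r th Hr Hs0 (D 6%nat ltac:(lia))).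
    fold T. field. lra. }
  assert (HH: normHS2 6 m1 m2 x = (INR m1 * ((Xv T (cos (INR 1 * PI / INR 6)) (sin (INR 1 * PI / INR 6))) + (Xv T (cos (INR 5 * PI / INR 6)) (sin (INR 5 * PI / INR 6)))) + INR m1 * (Xv T (cos (INR 3 * PI / INR 6)) (sin (INR 3 * PI / INR 6))) + INR m2 * ((Xv T (cos (INR 2 * PI / INR 6)) (sin (INR 2 * PI / INR 6))) + (Xv T (cos (INR 4 * PI / INR 6)) (sin (INR 4 * PI / INR 6)))) + INR m2 * (Xv T (cos (INR 6 * PI / INR 6)) (sin (INR 6 * PI / INR 6))))^2 / r^2).
  { unfold x, normHS2. cbn [sum1]; unfold mult_k, Nat.odd; cbn [Nat.even negb].
    rewrite (eig 6 1 r th Hr Hs0 (D 1%nat ltac:(lia))), (eig 6 2 r th Hr Hs0 (D 2%nat ltac:(lia))), (eig 6 3 r th Hr Hs0 (D 3%nat ltac:(lia))), (eig 6 4 r th Hr Hs0 (D 4%nat ltac:(lia))), (eig 6 5 r th Hr Hs0 (D 5%nat ltac:(lia))), (eig 6 6 r th Hr Hs0 (D 6%nat ltac:(lia))).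
    fold T. field. lra. }
  pose proof (den_nz th _ Hs0 (D 1%nat ltac:(lia))) as N1. fold T in N1.
  pose proof (den_nz th _ Hs0 (D 2%nat ltac:(lia))) as N2. fold T in N2.
  pose proof (den_nz th _ Hs0 (D 3%nat ltac:(lia))) as N3. fold T in N3.
  pose proof (den_nz th _ Hs0 (D 4%nat ltac:(lia))) as N4. fold T in N4.
  pose proof (den_nz th _ Hs0 (D 5%nat ltac:(lia))) as N5. fold T in N5.
  pose proof (den_nz th _ Hs0 (D 6%nat ltac:(lia))) as N6. fold T in N6.
  assert (E1: INR 1 * PI / INR 6 = PI/6) by (simpl; field).
  assert (E2: INR 2 * PI / INR 6 = PI/3) by (simpl; field).
  assert (E3: INR 3 * PI / INR 6 = PI/2) by (simpl; field).
  assert (E4: INR 4 * PI / INR 6 = PI - PI/3) by (simpl; field).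
  assert (E5: INR 5 * PI / INR 6 = PI - PI/6) by (simpl; field).
  assert (E6: INR 6 * PI / INR 6 = PI) by (simpl; field).
  rewrite ?E1, ?E2, ?E3, ?E4, ?E5, ?E6 in HA.
  rewrite ?E1, ?E2, ?E3, ?E4, ?E5, ?E6 in HH.
  rewrite ?E1, ?E2, ?E3, ?E4, ?E5, ?E6 in N1.
  rewrite ?E1, ?E2, ?E3, ?E4, ?E5, ?E6 in N2.
  rewrite ?E1, ?E2, ?E3, ?E4, ?E5, ?E6 in N3.
  rewrite ?E1, ?E2, ?E3, ?E4, ?E5, ?E6 in N4.
  rewrite ?E1, ?E2, ?E3, ?E4, ?E5, ?E6 in N5.
  rewrite ?E1, ?E2, ?E3, ?E4, ?E5, ?E6 in N6.
  rewrite ?Rtrigo_facts.cos_pi_minus, ?sin_PI_x, ?cos_PI6, ?sin_PI6, ?cos_PI3, ?sin_PI3, ?cos_PI4, ?sin_PI4, ?cos_PI2, ?sin_PI2, ?cos_PI, ?sin_PI in HA.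
  rewrite ?Rtrigo_facts.cos_pi_minus, ?sin_PI_x, ?cos_PI6, ?sin_PI6, ?cos_PI3, ?sin_PI3, ?cos_PI4, ?sin_PI4, ?cos_PI2, ?sin_PI2, ?cos_PI, ?sin_PI in HH.
  rewrite ?Rtrigo_facts.cos_pi_minus, ?sin_PI_x, ?cos_PI6, ?sin_PI6, ?cos_PI3, ?sin_PI3, ?cos_PI4, ?sin_PI4, ?cos_PI2, ?sin_PI2, ?cos_PI, ?sin_PI in N1.
  rewrite ?Rtrigo_facts.cos_pi_minus, ?sin_PI_x, ?cos_PI6, ?sin_PI6, ?cos_PI3, ?sin_PI3, ?cos_PI4, ?sin_PI4, ?cos_PI2, ?sin_PI2, ?cos_PI, ?sin_PI in N2.
  rewrite ?Rtrigo_facts.cos_pi_minus, ?sin_PI_x, ?cos_PI6, ?sin_PI6, ?cos_PI3, ?sin_PI3, ?cos_PI4, ?sin_PI4, ?cos_PI2, ?sin_PI2, ?cos_PI, ?sin_PI in N3.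
  rewrite ?Rtrigo_facts.cos_pi_minus, ?sin_PI_x, ?cos_PI6, ?sin_PI6, ?cos_PI3, ?sin_PI3, ?cos_PI4, ?sin_PI4, ?cos_PI2, ?sin_PI2, ?cos_PI, ?sin_PI in N4.
  rewrite ?Rtrigo_facts.cos_pi_minus, ?sin_PI_x, ?cos_PI6, ?sin_PI6, ?cos_PI3, ?sin_PI3, ?cos_PI4, ?sin_PI4, ?cos_PI2, ?sin_PI2, ?cos_PI, ?sin_PI in N5.
  rewrite ?Rtrigo_facts.cos_pi_minus, ?sin_PI_x, ?cos_PI6, ?sin_PI6, ?cos_PI3, ?sin_PI3, ?cos_PI4, ?sin_PI4, ?cos_PI2, ?sin_PI2, ?cos_PI, ?sin_PI in N6.
  destruct (pair T (sqrt 3 / 2) (1/2) N1 N5) as [Z0 [P0 Q0]].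
  rewrite P0 in HH. rewrite Q0 in HA.
  rewrite ?sq3 in HH.
  rewrite ?sq3 in HA.
  rewrite ?sq3 in Z0.
  destruct (pair T (1/2) (sqrt 3 / 2) N2 N4) as [Z1 [P1 Q1]].
  rewrite P1 in HH. rewrite Q1 in HA.
  rewrite ?sq3 in HH.
  rewrite ?sq3 in HA.
  rewrite ?sq3 in Z1.
  unfold Xv in HA, HH.
  assert (HT: T <> 0) by (intro E; apply N3; rewrite E; ring).
  assert (Hc: cos th = T * sin th) by (unfold T; field; auto).
  assert (HS2: sin th ^ 2 = / (1 + T^2)) by (apply s2_val; auto).
  assert (HT2: 0 < 1 + T^2) by nra.
  assert (SG: sin (INR 6 * th) ^ 2 = (6*T^5 - 20*T^3 + 6*T)^2 / (1+T^2)^6).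
  { replace (INR 6 * th) with (2*(2*th+th)) by (simpl; ring).
    rewrite sin_2a, sin_plus, cos_plus, sin_2a, cos_2a, ?Hc.
    transitivity ((sin th ^2)^6 * (6*T^5 - 20*T^3 + 6*T)^2); [ring | rewrite HS2; field; lra]. }
  assert (HP: 6*T^5 - 20*T^3 + 6*T <> 0).
  { intro E. pose proof (sin_g_pos 6 th ltac:(lia) H0 H1) as G.
    assert (G2: 0 < sin (INR 6 * th)^2) by (apply pow_lt; lra).
    rewrite SG, E in G2. replace (0^2 / (1+T^2)^6) with 0 in G2 by (field; lra). lra. }
  assert (HnR: INR n = 3*(INR m1 + INR m2)).
  { apply (f_equal INR) in Hn. rewrite !mult_INR, plus_INR in Hn. simpl in Hn. lra. }
  assert (HM1: 1 <= INR m1) by (apply (le_INR 1); lia).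
  assert (HM2: 0 <= INR m2) by apply pos_INR.
  
  rewrite HA, HH, SG, HnR. unfold delta. cbn [Nat.leb].
  replace (INR 6) with 6 by (simpl; ring).
  split.
  - field. repeat split; try lra; auto.
  - intro Heq2. subst m2. field. repeat split; try lra; auto.
Qed.

Theorem lemma4p11 (g m1 m2 n : nat) (r theta : R) :
  iso_data g m1 m2 n ->
  0 < r -> 0 < theta -> theta < PI / INR g ->
  let x := polar r theta in
  normAS2 g m1 m2 x - INR g / (2 * INR n) * normHS2 g m1 m2 x =
    INR n / (2 * r ^ 2) *
      (INR g * (1 - (delta g m1 m2) ^ 2) / (sin (INR g * theta)) ^ 2
       + (INR g - 2))
  /\
  (m1 = m2 ->
   normAS2 g m1 m2 x - INR g / INR n * normHS2 g m1 m2 x =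
     INR n * (INR g - 1) / r ^ 2).
Proof.
  intros [Hg [Hm1 [Hm12 [Hodd Hn]]]] Hr H0 H1.
  destruct Hg as [E|[E|[E|[E|E]]]]; subst g.
  - exact (case1 m1 m2 n r theta Hm1 (Hodd eq_refl) Hn Hr H0 H1).
  - exact (case2 m1 m2 n r theta Hm1 Hn Hr H0 H1).
  - exact (case3 m1 m2 n r theta Hm1 (Hodd eq_refl) Hn Hr H0 H1).
  - exact (case4 m1 m2 n r theta Hm1 Hn Hr H0 H1).
  - exact (case6 m1 m2 n r theta Hm1 Hn Hr H0 H1).
Qed.
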